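(* Let $G$ be a finite group with $|G|\ge2$, $S\subseteq G$ symmetric, $H=\mathrm{Cay}(G,S)$ unweighted, $\alpha\in(0,1)$, and $C\ge1$. Let $S_\alpha=\{s\in\bar S:\mathrm{imp}(s)\ge\alpha\}$. Then there exist $\ell\ge\frac{\alpha}{C\log^2|G|}|S_\alpha|$, distinct $s_1,\dots,s_\ell\in S_\alpha$ and vectors $v_1,\dots,v_\ell\in\mathbb{R}^G$ with $v_i^\top L_Hv_i>0$ such that $\mathrm{score}(s_i,v_i)\ge\alpha$ for all $i\in[\ell]$ and $\mathrm{score}(s_i,v_j)\le\frac{\alpha}{C\log^2|G|}$ for all $1\le j<i\le\ell$.
   Context: Logarithms are base 2. For $g\in G$, $A_g\in\{0,1\}^{G\times G}$ is the permutation matrix with $(A_g)_{u,v}=1$ iff $v=ug$. $S$ symmetric means $s\in S\Rightarrow s^{-1}\in S$; $\bar S\subseteq S$ contains exactly one element of each pair $\{s,s^{-1}\}$ with $s\neq s^{-1}$ and every $s\in S$ with $s=s^{-1}$. $L_s=2I-A_s-A_{s^{-1}}$ if $s\ne s^{-1}$, $L_s=I-A_s$ if $s=s^{-1}$; $L_H=\sum_{s\in\bar S}L_s$. For $v$ with $v^\top L_Hv>0$, $\mathrm{score}(s,v)=\frac{v^\top L_sv}{v^\top L_Hv}$, and $\mathrm{imp}(s)=\max\{\mathrm{score}(s,v):v^\top L_Hv>0\}$. *)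

(* Defs.v *)
From HB Require Import structures.
From mathcomp Require Import all_boot all_order all_algebra all_fingroup.
From mathcomp Require Import all_classical all_reals.
From mathcomp Require Import exp.
Set Implicit Arguments. Unset Strict Implicit. Unset Printing Implicit Defensive.
Import Order.TTheory GRing.Theory Num.Theory.
Local Open Scope ring_scope.
Local Open Scope classical_set_scope.

Section Defs.
Variables (R : realType) (gT : finGroupType).

Definition log2 (x : R) : R := ln x / ln 2.

Definition gmx := gT -> gT -> R.

Definition Aperm (g : gT) : gmx := fun u v => ((v == (u * g)%g) : bool)%:R.
Definition Iden : gmx := fun u v => ((u == v) : bool)%:R.

Definition qf (M : gmx) (v : gT -> R) : R :=
  \sum_(u : gT) \sum_(w : gT) v u * M u w * v w.

Definition symmetric_set (S : {set gT}) : Prop :=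
  forall s, s \in S -> (s^-1)%g \in S.

Definition is_Sbar (S Sbar : {set gT}) : Prop :=
  Sbar \subset S /\
  (forall s, s \in S -> s = (s^-1)%g -> s \in Sbar) /\
  (forall s, s \in S -> s != (s^-1)%g -> (s \in Sbar) (+) ((s^-1)%g \in Sbar)).

Definition Lgen (s : gT) : gmx := fun u w =>
  if s != (s^-1)%g then 2 * Iden u w - Aperm s u w - Aperm (s^-1)%g u w
  else Iden u w - Aperm s u w.

Definition LH (Sbar : {set gT}) : gmx := fun u w => \sum_(s in Sbar) Lgen s u w.

Definition score (Sbar : {set gT}) (s : gT) (v : gT -> R) : R :=
  qf (Lgen s) v / qf (LH Sbar) v.

(* imp(s) = max { score(s,v) : v^T L_H v > 0 }, written as a supremum
   (the maximum is attained, so this is the same value) *)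
Definition imp (Sbar : {set gT}) (s : gT) : R :=
  sup [set score Sbar s v | v in [set v : gT -> R | 0 < qf (LH Sbar) v]].

Definition S_alpha (Sbar : {set gT}) (alpha : R) : {set gT} :=
  [set s in Sbar | alpha <= imp Sbar s].

End Defs.

Arguments score {R gT} Sbar s v.
Arguments imp {R gT} Sbar s.
Arguments S_alpha {R gT} Sbar alpha.
Arguments qf {R gT} M v.
Arguments LH {R gT} Sbar _ _.
Arguments Lgen {R gT} s _ _.

(* Main.v *)
Set Warnings "-all".
Require Import Defs.
From HB Require Import structures.
From mathcomp Require Import all_boot all_order all_algebra all_fingroup.
From mathcomp Require Import all_classical all_reals.
From mathcomp Require Import exp topology normedtype derive.
From mathcomp Require Import ring lra zify.
Import Order.TTheory GRing.Theory Num.Theory.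
Local Open Scope ring_scope.
Local Open Scope classical_set_scope.
Import numFieldNormedType.Exports ArrowAsProduct.

Section Alg.
Variables (R : realType) (gT : finGroupType).
Implicit Types (v : gT -> R) (t : gT).

Definition sq t v : R := \sum_(u : gT) (v u - v (u * t)%g) ^+ 2.

Lemma sum_delta (f : gT -> R) a : \sum_w ((w == a)%:R * f w) = f a.
Proof.
rewrite (bigD1 a) //= eqxx mul1r big1 ?addr0 // => w /negbTE ->; by rewrite mul0r.
Qed.

Lemma reidx (F : gT -> R) t : \sum_u F u = \sum_u F (u * t)%g.
Proof. by rewrite (reindex_inj (mulIg t)). Qed.

Lemma sqE t v : sq t v = 2 * \sum_u v u ^+ 2 - 2 * \sum_u v u * v (u * t)%g.
Proof.
rewrite /sq.
have -> : \sum_u (v u - v (u * t)%g) ^+ 2 = \sum_u v u ^+2 - 2 * \sum_u v u * v (u * t)%g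
  + \sum_u v (u * t)%g ^+ 2.
  rewrite mulr_sumr -sumrB -big_split /=; apply: eq_bigr => u _; ring.
rewrite -(reidx (fun u => v u ^+ 2)); ring.
Qed.

Lemma qf_Lgen t v : qf (Lgen t) v =
  (if t != (t^-1)%g then 1 else 2^-1) * sq t v.
Proof.
rewrite sqE /qf /Lgen; case: ifP => ht.
- have E u w : v u * (2 * @Iden R gT u w - @Aperm R gT t u w - @Aperm R gT t^-1 u w) * v w =
     2 * ((w == u)%:R * (v u * v w)) - (w == u * t)%g%:R * (v u * v w)
     - (w == u * t^-1)%g%:R * (v u * v w).
    rewrite /Iden /Aperm eq_sym; ring.
  under eq_bigr do rewrite (eq_bigr _ (fun w _ => E _ w)) !sumrB -mulr_sumr !sum_delta.
  rewrite !sumrB -!mulr_sumr.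
  rewrite [X in _ - _ - X](reidx _ t).
  under [X in _ - _ - X]eq_bigr do rewrite mulgK.
  have -> : \sum_u v (u * t)%g * v u = \sum_u v u * v (u * t)%g
    by apply: eq_bigr => u _; rewrite mulrC.
  under eq_bigr do rewrite -expr2. ring.
- have E u w : v u * (@Iden R gT u w - @Aperm R gT t u w) * v w =
     ((w == u)%:R * (v u * v w)) - (w == u * t)%g%:R * (v u * v w).
    rewrite /Iden /Aperm eq_sym; ring.
  under eq_bigr do rewrite (eq_bigr _ (fun w _ => E _ w)) !sumrB !sum_delta.
  rewrite sumrB; under eq_bigr do rewrite -expr2.
  by field.
Qed.


Lemma sq_ge0 t v : 0 <= sq t v.
Proof. by apply: sumr_ge0 => u _; rewrite sqr_ge0. Qed.

Lemma coef_gt0 t : 0 < (if t != (t^-1)%g then 1 else 2^-1 : R).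
Proof. by case: ifP => _ //; rewrite invr_gt0. Qed.

Lemma P_ge0 t v : 0 <= qf (Lgen t) v.
Proof. by rewrite qf_Lgen mulr_ge0 ?sq_ge0 // ltW // coef_gt0. Qed.

Variable Sbar : {set gT}.

Lemma qf_LH v : qf (LH Sbar) v = \sum_(t in Sbar) qf (Lgen t) v.
Proof.
rewrite /qf /LH.
under eq_bigr => u _ do under eq_bigr => w _ do rewrite mulr_sumr mulr_suml.
under eq_bigr => u _ do rewrite exchange_big.
by rewrite exchange_big.
Qed.

Lemma Q_ge0 v : 0 <= qf (LH Sbar) v.
Proof. by rewrite qf_LH sumr_ge0 // => t _; exact: P_ge0. Qed.

Lemma score_ge0 t v : 0 <= score Sbar t v.
Proof. by rewrite /score divr_ge0 ?P_ge0 ?Q_ge0. Qed.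

Lemma sum_score v : 0 < qf (LH Sbar) v -> \sum_(t in Sbar) score Sbar t v = 1.
Proof.
move=> Hq; rewrite /score -mulr_suml -qf_LH divff //; exact: lt0r_neq0.
Qed.

Lemma Q0 v : qf (LH Sbar) v = 0 -> forall t, t \in Sbar -> forall u, v (u * t)%g = v u.
Proof.
rewrite qf_LH => H t ht u.
have := psumr_eq0P (fun t _ => P_ge0 t v) H ht.
rewrite qf_Lgen => /eqP; rewrite mulf_eq0 (negbTE (lt0r_neq0 (coef_gt0 t))) /= => /eqP.
move=> /(psumr_eq0P (fun u _ => sqr_ge0 (v u - v (u * t)%g))) /(_ u isT) /eqP.
by rewrite sqrf_eq0 subr_eq0 => /eqP ->.
Qed.

Lemma P_inv (f : gT -> R) t v : (forall u, f (u * t)%g = f u) ->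
  qf (Lgen t) (fun x => v x - f x) = qf (Lgen t) v.
Proof.
move=> hf; rewrite !qf_Lgen /sq; congr (_ * _); apply: eq_bigr => u _.
by rewrite hf; congr (_ ^+ 2); ring.
Qed.

Lemma Q_inv (f : gT -> R) v : (forall t, t \in Sbar -> forall u, f (u * t)%g = f u) ->
  qf (LH Sbar) (fun x => v x - f x) = qf (LH Sbar) v.
Proof. by move=> hf; rewrite !qf_LH; apply: eq_bigr => t ht; rewrite P_inv //; exact: hf. Qed.

Lemma score_inv (f : gT -> R) t v : (forall t, t \in Sbar -> forall u, f (u * t)%g = f u) ->
  t \in Sbar -> score Sbar t (fun x => v x - f x) = score Sbar t v.
Proof. by move=> hf ht; rewrite /score Q_inv // P_inv //; exact: hf. Qed.

Lemma qfZ (M : gmx R gT) c v : qf M (fun x => c * v x) = c ^+ 2 * qf M v.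
Proof.
rewrite /qf mulr_sumr; apply: eq_bigr => u _; rewrite mulr_sumr.
by apply: eq_bigr => w _; ring.
Qed.

Lemma scoreZ c t v : c != 0 -> score Sbar t (fun x => c * v x) = score Sbar t v.
Proof.
move=> hc; rewrite /score !qfZ -mulf_div divff ?mul1r //.
by rewrite expf_neq0.
Qed.

Lemma qf0 (M : gmx R gT) : qf M (fun _ => 0) = 0.
Proof. by rewrite /qf big1 // => u _; rewrite big1 // => w _; rewrite !mul0r. Qed.


Lemma cont_sum (I : finType) (F : I -> (gT -> R) -> R) :
  (forall i, continuous (F i)) -> continuous (fun w => \sum_i F i w).
Proof. by move=> H; apply: continuous_big => //; exact: add_continuous. Qed.

Lemma cont_proj x : continuous (fun w : gT -> R => w x).
Proof. exact: proj_continuous. Qed.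

Lemma cont_mul (f g : (gT -> R) -> R) : continuous f -> continuous g ->
  continuous (fun w => f w * g w).
Proof. by move=> hf hg w; exact: (continuousM (hf w) (hg w)). Qed.

Lemma cont_qf (M : gmx R gT) : continuous (qf M).
Proof.
apply: cont_sum => u; apply: cont_sum => w.
apply: cont_mul; last exact: cont_proj.
apply: cont_mul; [exact: cont_proj | exact: cst_continuous].
Qed.

Lemma box_compact : compact [set f : gT -> R | forall i, `[-1, 1] (f i)].
Proof.
have H := (@tychonoff gT (fun _ => R) (fun _ => `[-1, 1]) (fun _ => @segment_compact R (-1) 1)).
exact: H.
Qed.

Definition eS : rel gT := fun x y => [exists t in Sbar, (y == x * t)%g || (x == y * t)%g].

Lemma eS_sym : symmetric eS.
Proof. by move=> x y; rewrite /eS; apply: eq_existsb => t; rewrite orbC. Qed.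

Lemma Q0_conn v : qf (LH Sbar) v = 0 -> forall x y, connect eS x y -> v x = v y.
Proof.
move=> H x y /connectP [p]; elim: p x => [|z p IH] x /=; first by move=> _ ->.
case/andP => exz pz ey; rewrite -(IH z pz ey).
move: exz; rewrite /eS => /existsP [t /andP [ht /orP [] /eqP ->]].
- by rewrite (@Q0 v H t ht).
- by rewrite (@Q0 v H t ht).
Qed.

Definition rt x := fingraph.root eS x.

Lemma rt_edge t u : t \in Sbar -> rt (u * t)%g = rt u.
Proof.
move=> ht; apply/esym/(fingraph.rootP (sym_connect_sym eS_sym)).
by apply: connect1; apply/existsP; exists t; rewrite ht eqxx.
Qed.

Lemma rt_rt x : rt (rt x) = rt x.
Proof. exact: (fingraph.root_root (sym_connect_sym eS_sym)). Qed.

Definition K := [set w : gT -> R | \sum_x w x ^+ 2 = 1] `&`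
                [set w : gT -> R | \sum_x w (rt x) ^+ 2 = 0].

Lemma K_Qpos w : K w -> 0 < qf (LH Sbar) w.
Proof.
case=> /= h1 h2; rewrite lt_def Q_ge0 andbT; apply/eqP => hq.
have hw x : w x = 0.
  rewrite (@Q0_conn w hq _ _ (connect_root eS x)).
  move/(psumr_eq0P (fun x _ => sqr_ge0 (w (rt x)))): h2 => /(_ x isT) /eqP.
  by rewrite sqrf_eq0 => /eqP.
move: h1; rewrite big1; last by move=> x _; rewrite hw expr0n.
by move/esym/eqP; rewrite oner_eq0.
Qed.

Lemma rep v : 0 < qf (LH Sbar) v ->
  exists2 w, K w & forall t, t \in Sbar -> score Sbar t w = score Sbar t v.
Proof.
move=> hv.
have hf : forall t, t \in Sbar -> forall u, v (rt (u * t)%g) = v (rt u).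
  by move=> t ht u; rewrite rt_edge.
pose g := fun x => v x - v (rt x).
have hgQ : qf (LH Sbar) g = qf (LH Sbar) v := Q_inv (fun x => v (rt x)) v hf.
pose n := \sum_x g x ^+ 2.
have hn : 0 < n.
  rewrite lt_def sumr_ge0 ?andbT; last by move=> x _; exact: sqr_ge0.
  apply/eqP => hn0.
  have hg0 : g = fun _ => 0.
    apply: funext => x.
    move/(psumr_eq0P (fun x _ => sqr_ge0 (g x))): hn0 => /(_ x isT) /eqP.
    by rewrite sqrf_eq0 => /eqP.
  by move: hv; rewrite -hgQ hg0 qf0 ltxx.
pose c := (Num.sqrt n)^-1.
have hsq : 0 < Num.sqrt n by rewrite sqrtr_gt0.
have hc : c != 0 by rewrite invr_eq0 gt_eqF.
exists (fun x => c * g x).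
  split => /=.
    under eq_bigr do rewrite exprMn.
    by rewrite -mulr_sumr exprVn sqr_sqrtr ?ltW // mulVf // gt_eqF.
  rewrite big1 // => x _; rewrite /g rt_rt subrr mulr0 expr0n //.
move=> t ht; rewrite scoreZ //.
exact: (score_inv (fun x => v (rt x)) t v hf ht).
Qed.

Lemma K_closed : closed K.
Proof.
have hc1 : continuous (fun w : gT -> R => \sum_x w x ^+ 2).
  apply: (@cont_sum gT (fun x w => w x ^+ 2)) => x.
  by apply: cont_mul; exact: cont_proj.
have hc2 : continuous (fun w : gT -> R => \sum_x w (rt x) ^+ 2).
  apply: (@cont_sum gT (fun x w => w (rt x) ^+ 2)) => x.
  by apply: cont_mul; exact: cont_proj.
apply: closedI.
  apply: (@preimage_closed _ _ (fun w : gT -> R => \sum_x w x ^+ 2) [set x | x = 1]).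
    by move=> w _; exact: hc1.
  exact: closed_eq.
apply: (@preimage_closed _ _ (fun w : gT -> R => \sum_x w (rt x) ^+ 2) [set x | x = 0]).
  by move=> w _; exact: hc2.
exact: closed_eq.
Qed.

Lemma K_compact : compact K.
Proof.
apply: (subclosed_compact K_closed box_compact).
move=> w [/= h1 _] i.
have hi : w i ^+ 2 <= 1.
  rewrite -h1 (bigD1 i) //= lerDl sumr_ge0 // => x _; exact: sqr_ge0.
rewrite /= in_itv /=; apply/andP; split; nra.
Qed.

Lemma attain s alpha : s \in Sbar -> 0 < alpha -> alpha <= imp Sbar s ->
  exists v, 0 < qf (LH Sbar) v /\ alpha <= score Sbar s v.
Proof.
move=> hs ha himp.
have [[v0 hv0]|hA] := pselect (exists v : gT -> R, 0 < qf (LH Sbar) v); last first.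
  have hA0 : [set score Sbar s v | v in [set v : gT -> R | 0 < qf (LH Sbar) v]] = set0.
    by apply/seteqP; split => // y [v hv _]; exfalso; apply: hA; exists v.
  by move: himp; rewrite /imp hA0 sup0 => h; move: (lt_le_trans ha h); rewrite ltxx.
have [w0 Kw0 _] := @rep v0 hv0.
have cont : {within K, continuous (score Sbar s)}.
  apply: continuous_in_subspaceT => w Kw.
  have hq : qf (LH Sbar) w != 0 by rewrite gt_eqF // K_Qpos //; exact: set_mem.
  exact: (continuousM (cont_qf _ w) (continuousV hq (cont_qf _ w))).
have [c Kc hmax] := compact_EVT_max (ex_intro _ w0 Kw0) K_compact cont.
exists c; split; first by apply: K_Qpos; exact: set_mem.
apply: (le_trans himp); apply: ge_sup.
  by exists (score Sbar s v0); exists v0.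
move=> y [v hv <-]; have [w Kw hsw] := @rep v hv.
rewrite -hsw //; apply: hmax; exact: mem_set.
Qed.

End Alg.

Section Greedy.
Variables (R : realType) (gT : finGroupType) (Sbar : {set gT}) (alpha eps : R).
Hypotheses (ha : 0 < alpha) (heps : eps <= alpha).

Let Sa := S_alpha Sbar alpha.
Let d : gT * (gT -> R) := (1%g, fun _ => 0).

Lemma Sa_sub : Sa \subset Sbar.
Proof. by apply/fintype.subsetP => t; rewrite /Sa /S_alpha inE => /andP []. Qed.

Lemma wit s : s \in Sa -> exists v, 0 < qf (LH Sbar) v /\ alpha <= score Sbar s v.
Proof.
rewrite /Sa /S_alpha inE => /andP [hs hi]; exact: attain.
Qed.

Lemma greedy n : forall T : {set gT}, (#|T| <= n)%N -> T \subset Sa ->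
 exists ls : seq (gT * (gT -> R)),
 [/\ uniq (map fst ls), all (fun x => x \in T) (map fst ls),
   forall i, (i < size ls)%N -> 0 < qf (LH Sbar) (nth d ls i).2 /\
        alpha <= score Sbar (nth d ls i).1 (nth d ls i).2,
   forall i j, (j < i)%N -> (i < size ls)%N ->
        score Sbar (nth d ls i).1 (nth d ls j).2 <= eps
 & eps * #|T|%:R <= (size ls)%:R].
Proof.
elim: n => [|n IH] T hT hTS.
  move: hT; rewrite leqn0 => /eqP/cards0_eq ->.
  by exists [::]; split => //=; rewrite cards0 mulr0.
case: (set_0Vmem T) => [-> | [s1 hs1]].
  by exists [::]; split => //=; rewrite cards0 mulr0.
have hs1a : s1 \in Sa := fintype.subsetP hTS _ hs1.
have [v1 [hq1 hsc1]] := wit s1 hs1a.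
pose R1 := [set t in T | eps <= score Sbar t v1].
pose T' := T :\: R1.
have hs1R : s1 \in R1 by rewrite inE hs1 (le_trans heps hsc1).
have hR1T : R1 \subset T by apply/fintype.subsetP => t; rewrite inE => /andP [].
have hcard : (#|T'| + #|R1| = #|T|)%N.
  by rewrite addnC -(cardsID R1 T) (finset.setIidPr hR1T).
have hR1pos : (0 < #|R1|)%N by rewrite card_gt0; apply/set0Pn; exists s1.
have hT' : (#|T'| <= n)%N by lia.
have hT'S : T' \subset Sa := fintype.subset_trans (subsetDl T R1) hTS.
have [ls' [hu hall hP hQ hcnt]] := IH T' hT' hT'S.
exists ((s1, v1) :: ls'); split.
- rewrite /= hu andbT; apply/negP => hin.
  by move/allP: hall => /(_ s1 hin); rewrite /T' finset.in_setD hs1R.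
- rewrite /= hs1 /=; apply/allP => x /(allP hall).
  by rewrite /T' finset.in_setD => /andP [].
- by case => [|i] /= hi; [split | apply: hP].
- move=> [|i] [|j] //= hji hi.
    have := (all_nthP 1%g hall) i; rewrite size_map => /(_ hi).
    rewrite (nth_map d) // /T' /R1 !inE => /andP [hn hx]; move: hn; rewrite hx /= -ltNge.
    exact: ltW.
  exact: hQ.
- rewrite /= -hcard natrD mulrDr -addn1 natrD lerD //.
  have hR1S : R1 \subset Sbar := fintype.subset_trans hR1T (fintype.subset_trans hTS Sa_sub).
  apply: (@le_trans _ _ (\sum_(t in R1) score Sbar t v1)).
    rewrite mulr_natr -sumr_const; apply: ler_sum => t; rewrite inE => /andP [].
    by [].
  rewrite -(@sum_score R gT Sbar v1 hq1) (@big_setID _ _ _ _ Sbar R1) /= (finset.setIidPr hR1S) lerDl.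
  by apply: sumr_ge0 => t _; exact: (@score_ge0 R gT Sbar).
Qed.

End Greedy.

Theorem mainTheorem5 (R : realType) (gT : finGroupType)
  (S Sbar : {set gT}) (alpha C : R) :
  (1 < #|gT|)%N ->
  symmetric_set S ->
  is_Sbar S Sbar ->
  0 < alpha < 1 ->
  1 <= C ->
  let eps := alpha / (C * (log2 (#|gT|%:R : R)) ^+ 2) in
  exists (l : nat) (s : 'I_l -> gT) (v : 'I_l -> gT -> R),
    eps * (#|S_alpha Sbar alpha|)%:R <= l%:R /\
    [/\ injective s,
        forall i, s i \in S_alpha Sbar alpha,
        forall i, 0 < qf (LH Sbar) (v i),
        forall i, alpha <= score Sbar (s i) (v i)
      & forall i j : 'I_l, (j < i)%N -> score Sbar (s i) (v j) <= eps].
Proof.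
move=> hG _ _ /andP [ha0 ha1] hC eps.
set L := log2 (#|gT|%:R : R).
have hL : 1 <= L.
  rewrite /L /log2 ler_pdivlMr ?mul1r ?ln_gt0 ?ltr1n //.
  by rewrite ler_ln ?posrE ?ler_nat // ltr0n; lia.
have hL2 : 1 <= L ^+ 2 by nra.
have hX : 1 <= C * L ^+ 2 by nra.
have heps : eps <= alpha.
  rewrite /eps -/L ler_pdivrMr; last by apply: lt_le_trans hX; exact: ltr01.
  by rewrite -{1}(mulr1 alpha) ler_wpM2l // ltW.
pose d : gT * (gT -> R) := (1%g, fun _ => 0).
have [ls [hu hall hP hQ hcnt]] :=
  @greedy R gT Sbar alpha eps ha0 heps _ (S_alpha Sbar alpha) (leqnn _) (subxx _).
exists (size ls), (fun i => (nth d ls i).1), (fun i => (nth d ls i).2).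
split => //; split.
- move=> i j /eqP; rewrite -!(nth_map d 1%g fst) ?ltn_ord //.
  by rewrite nth_uniq ?size_map ?ltn_ord // => /eqP/val_inj.
- move=> i; have := (all_nthP 1%g hall) i; rewrite size_map => /(_ (ltn_ord i)).
  by rewrite (nth_map d) ?ltn_ord.
- by move=> i; case: (hP i (ltn_ord i)).
- by move=> i; case: (hP i (ltn_ord i)).
- by move=> i j hji; apply: hQ => //; exact: ltn_ord.
Qed.
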